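(* Let $\Gamma=\langle V,(w_u)_{u\in V},\alpha,\beta\rangle$ be a star celebrity game with $\beta>1$ and $n=|V|$, and let $G$ be a Nash equilibrium graph of $\Gamma$. If there is $v\in V$ with $\max_{x\in V}d_G(v,x)\le\beta-1$, then $$W(G,\beta)=\sum_{u\in V}\ \sum_{x:\,d_G(u,x)>\beta}w_x\ \le\ \alpha(n-1).$$
   Context: A celebrity game $\Gamma=\langle V,(w_u)_{u\in V},\alpha,\beta\rangle$ consists of a set of players $V=\{1,\dots,n\}$, celebrity weights $w_u>0$, a link cost $\alpha>0$ and a critical distance $\beta$ with $1\le\beta\le n-1$. A strategy of player $u$ is a set $S_u\subseteq V\setminus\{u\}$; a strategy profile is $S=(S_1,\dots,S_n)$; its outcome graph $G[S]$ is the undirected graph on $V$ with edge set $\{\{u,v\}: u\in S_v\text{ or }v\in S_u\}$. With $d_G$ the graph distance (infinite between different connected components), the cost of player $u$ is $c_u(S)=\alpha|S_u|+\sum_{v:\,d_{G[S]}(u,v)>\beta}w_v$. $S$ is a Nash equilibrium if no player can strictly decrease its cost by changing only its own strategy; a graph $G$ is a Nash equilibrium graph if $G=G[S]$ for some Nash equilibrium $S$. $\Gamma$ is a star celebrity game if it has a Nash equilibrium graph that is connected. *)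

(* Defs.v *)
From mathcomp Require Import all_boot all_order all_algebra.
Set Implicit Arguments. Unset Strict Implicit. Unset Printing Implicit Defensive.
Import Order.TTheory GRing.Theory Num.Theory.

(* A strategy profile: S u is the set of players u buys links to. *)
Definition profile (n : nat) := 'I_n -> {set 'I_n}.

Definition valid_profile n (S : profile n) : Prop := forall u, u \notin S u.

Definition outcome n (S : profile n) : rel 'I_n :=
  fun u v => (u \in S v) || (v \in S u).

Fixpoint ball n (G : rel 'I_n) (k : nat) (u : 'I_n) : {set 'I_n} :=
  match k with
  | 0 => [set u]
  | k'.+1 => ball G k' u :|: [set y | [exists x in ball G k' u, G x y]]
  end.

(* d_G(u,v) > beta  (including d = infinity) *)
Definition far n (G : rel 'I_n) (beta : nat) (u v : 'I_n) : bool :=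
  v \notin ball G beta u.

Section Game.
Variable R : realFieldType.
Local Open Scope ring_scope.

Definition cost n (w : 'I_n -> R) (alpha : R) (beta : nat) (S : profile n)
  (u : 'I_n) : R :=
  alpha * (#|S u|)%:R + \sum_(v | far (outcome S) beta u v) w v.

Definition deviate n (S : profile n) (u : 'I_n) (T : {set 'I_n}) : profile n :=
  fun x => if x == u then T else S x.

Definition nash n (w : 'I_n -> R) (alpha : R) (beta : nat) (S : profile n) : Prop :=
  valid_profile S /\
  forall (u : 'I_n) (T : {set 'I_n}), u \notin T ->
    cost w alpha beta S u <= cost w alpha beta (deviate S u T) u.

Definition nash_graph n (w : 'I_n -> R) (alpha : R) (beta : nat) (G : rel 'I_n) : Prop :=
  exists S : profile n, nash w alpha beta S /\ forall u v, G u v = outcome S u v.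

Definition connected n (G : rel 'I_n) : Prop :=
  forall u v : 'I_n, exists k, v \in ball G k u.

Definition star_game n (w : 'I_n -> R) (alpha : R) (beta : nat) : Prop :=
  exists G, nash_graph w alpha beta G /\ connected G.

Definition Wcost n (w : 'I_n -> R) (G : rel 'I_n) (beta : nat) : R :=
  \sum_(u : 'I_n) \sum_(x | far G beta u x) w x.

End Game.

(* Main.v *)
Require Import Defs.
From mathcomp Require Import all_boot all_order all_algebra.
Import Order.TTheory GRing.Theory Num.Theory.
Local Open Scope ring_scope.

Lemma ball_mono_rel n (G G' : rel 'I_n) k u :
  (forall x y, G x y -> G' x y) -> ball G k u \subset ball G' k u.
Proof.
move=> H; elim: k => [|k IH] //=.
apply/subsetP=> x; rewrite !in_setU !inE => /orP[hx|/existsP[y /andP[hy gy]]].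
  by rewrite (subsetP IH x hx).
apply/orP; right; apply/existsP; exists y; rewrite (subsetP IH y hy) /=.
exact: H.
Qed.

Lemma ball_S n (G : rel 'I_n) k u : ball G k u \subset ball G k.+1 u.
Proof. by apply/subsetP=> x hx /=; rewrite inE hx. Qed.

Lemma ball_adj n (G : rel 'I_n) u v k x :
  G u v -> x \in ball G k v -> x \in ball G k.+1 u.
Proof.
move=> huv; elim: k x => [|k IH] x /=.
  rewrite inE => /eqP ->; rewrite !inE; apply/orP; right.
  apply/existsP; exists u; by rewrite !inE eqxx.
rewrite in_setU inE => /orP[hx|/existsP[y /andP[hy gy]]].
  by rewrite in_setU (IH x hx).
rewrite in_setU; apply/orP; right; rewrite inE; apply/existsP; exists y.
by rewrite (IH y hy) gy.
Qed.

Theorem lemma3 (R : realFieldType) (n : nat) (w : 'I_n -> R) (alpha : R)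
  (beta : nat)
  (hw : forall u, 0 < w u) (halpha : 0 < alpha)
  (hbeta1 : (1 <= beta)%N) (hbetan : (beta <= n - 1)%N)
  (hstar : star_game w alpha beta)
  (hbeta : (1 < beta)%N)
  (G : rel 'I_n) (hG : nash_graph w alpha beta G)
  (v : 'I_n) (hv : forall x : 'I_n, x \in ball G (beta - 1) v) :
  Wcost w G beta <= alpha * (n - 1)%:R.
Proof.
case: hG => S [[hval hnash] hGS].
have hb : beta = (beta - 1).+1 by rewrite subn1 prednK.
have farv : forall x, far G beta v x = false.
  move=> x; rewrite /far hb (subsetP (ball_S _ _ _ _) x (hv x)) //.
have term : forall u, u != v -> \sum_(x | far G beta u x) w x <= alpha.
  move=> u huv.
  set T := v |: S u.
  have huT : u \notin T by rewrite !inE negb_or huv hval.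
  have := hnash u T huT.
  rewrite /cost.
  have hfar : forall x, far (outcome (deviate S u T)) beta u x = false.
    move=> x; rewrite /far; apply/negbF.
    rewrite hb; apply: (ball_adj _ _ _ v).
      by rewrite /outcome /deviate eqxx !inE eqxx orbT.
    apply: (subsetP (ball_mono_rel _ _ _ _ _ _)) (hv x).
    move=> a b; rewrite hGS /outcome /deviate.
    case: (a =P u) => [->|_]; case: (b =P u) => [->|_] //=;
      by rewrite ?inE; case/orP=> ->; rewrite ?orbT.
  have -> : deviate S u T u = T by rewrite /deviate eqxx.
  rewrite [X in _ <= _ + X]big_pred0 ?addr0; last by move=> x; rewrite hfar.
  have hS : forall x, far (outcome S) beta u x = far G beta u x.
    have eqb : ball (outcome S) beta u = ball G beta u.
      apply/eqP; rewrite eqEsubset; apply/andP; split; apply: ball_mono_rel=> a b;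
      by rewrite hGS.
    by move=> x; rewrite /far eqb.
  rewrite (eq_bigl _ _ hS) => H.
  have hc : (#|T| <= (#|S u|).+1)%N by rewrite cardsU1; case: (v \in S u).
  have : alpha * (#|T|)%:R <= alpha * (#|S u|)%:R + alpha.
    by rewrite -[X in _ + X]mulr1 -mulrDr natr1 ler_pM2l // ler_nat.
  move=> H2; have := le_trans H H2; by rewrite lerD2l.
rewrite /Wcost (bigD1 v) //= big_pred0 ?add0r; last by move=> x; rewrite farv ?andbF.
apply: le_trans (ler_sum _ term) _.
rewrite sumr_const cardC1 card_ord mulr_natr.
by rewrite subn1.
Qed.
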